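(* Let $r\ge5$, let $T$ be a $K_r$-tree, let $G$ be a graph, and let $S=V(G)\cap V(T)$. Then, for any run of the $(r-2)_*$-BP process on $T$ with seed set $S$, \[ \langle G\cup T\rangle_{K_r}\subseteq Q\cup T, \] where $Q$ is the complete graph on the vertex set $V(G)\cup\langle S;T\rangle_*$.
   Context: A graph $T$ is a $K_r$-tree if it is the union of copies $H_1,\dots,H_\vartheta$ of $K_r$ such that for each $1<i\le\vartheta$, $H_i$ shares exactly one edge with $H_1\cup\cdots\cup H_{i-1}$ (the common vertices being exactly the two endpoints of that edge). An edge of $T$ is internal if it lies in at least two of the $H_i$. The $(r-2)_*$-bootstrap percolation process on $T$ with seed set $S\subseteq V(T)$: initially the vertices of $S$ are infected; in each step, either (usual step) some uninfected vertex with at least $r-2$ infected neighbors in $T$ becomes infected; or else (special step), if no usual step is possible but for some internal edge $f$ there are two copies $H_i\ne H_j$ containing $f$ such that $H_i$ has $r-4$ infected vertices and $H_j$ has $1$ infected vertex, all these $r-3$ vertices not in $f$, then an arbitrarily chosen vertex $u\in f$ becomes infected; otherwise the process terminates. $\langle S;T\rangle_*$ denotes the set of eventually infected vertices. For a graph $F$, the $K_r$-dynamics repeatedly adds an edge whenever it is the only missing edge of some copy of $K_r$ on the vertex set of $F$; $\langle F\rangle_{K_r}$ is the final graph. *)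

(* Defs.v *)
(* Vertices live in an ambient finite type V; a graph is a
   vertex set together with a set of edges, each edge a 2-element set. *)
From mathcomp Require Import all_boot.
Set Implicit Arguments. Unset Strict Implicit. Unset Printing Implicit Defensive.

Section KrTrees.
Variable V : finType.

Definition complete_edges (W : {set V}) : {set {set V}} :=
  [set e : {set V} | (#|e| == 2) && (e \subset W)].

(* A K_r-tree given by its copies H_0, ..., H_(theta-1) of K_r (vertex sets
   of size r); H_i (i>0) meets the union of the previous ones in exactly two
   vertices x,y, and {x,y} is an edge of that previous union (lies in some
   earlier copy). *)
Definition is_Krtree (r theta : nat) (H : 'I_theta -> {set V}) : Prop :=
  0 < theta /\
  (forall i, #|H i| = r) /\
  (forall i : 'I_theta, 0 < i ->
     exists x y : V, x != y /\
       H i :&: (\bigcup_(j : 'I_theta | j < i) H j) = [set x; y] /\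
       exists j : 'I_theta, j < i /\ [set x; y] \subset H j).

Definition tverts theta (H : 'I_theta -> {set V}) : {set V} :=
  \bigcup_(i : 'I_theta) H i.

Definition tedges theta (H : 'I_theta -> {set V}) : {set {set V}} :=
  [set e : {set V} | (#|e| == 2) && [exists i : 'I_theta, e \subset H i]].

Definition tnbhd theta (H : 'I_theta -> {set V}) (u : V) : {set V} :=
  [set v | (v != u) && [exists i : 'I_theta, (u \in H i) && (v \in H i)]].

Definition internal theta (H : 'I_theta -> {set V}) (f : {set V}) : Prop :=
  #|f| = 2 /\ exists i j : 'I_theta, i != j /\ f \subset H i /\ f \subset H j.

Definition usual_step r theta (H : 'I_theta -> {set V}) (I I' : {set V}) : Prop :=
  exists u, [/\ u \in tverts H, u \notin I,
                r - 2 <= #|tnbhd H u :&: I| & I' = u |: I].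

Definition special_step r theta (H : 'I_theta -> {set V}) (I I' : {set V}) : Prop :=
  (~ exists J, usual_step r H I J) /\
  exists f : {set V}, internal H f /\
    (exists i j : 'I_theta, i != j /\ f \subset H i /\ f \subset H j /\
       #|H i :&: I| = r - 4 /\ #|H j :&: I| = 1 /\
       (H i :&: I) :&: f = set0 /\ (H j :&: I) :&: f = set0) /\
    exists u, u \in f /\ I' = u |: I.

Definition bp_step r theta (H : 'I_theta -> {set V}) (I I' : {set V}) : Prop :=
  usual_step r H I I' \/ special_step r H I I'.

Inductive bp_reach r theta (H : 'I_theta -> {set V}) (S : {set V}) : {set V} -> Prop :=
| bp_refl : bp_reach r H S S
| bp_trans I I' : bp_reach r H S I -> bp_step r H I I' -> bp_reach r H S I'.

(* I is the final infected set of some (terminated) run with seed set S,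
   i.e. a possible value of <S;T>_* *)
Definition bp_final r theta (H : 'I_theta -> {set V}) (S I : {set V}) : Prop :=
  bp_reach r H S I /\ forall I', ~ bp_step r H I I'.

(* K_r-dynamics on the graph (W, E): e is an edge of the final graph <F>_{K_r} *)
Inductive kr_closure (r : nat) (W : {set V}) (E : {set {set V}}) : {set V} -> Prop :=
| krc_base e : e \in E -> kr_closure r W E e
| krc_step (X e : {set V}) :
    X \subset W -> #|X| = r -> #|e| = 2 -> e \subset X ->
    (forall e' : {set V}, #|e'| = 2 -> e' \subset X -> e' != e -> kr_closure r W E e') ->
    kr_closure r W E e.

End KrTrees.

(* Main.v *)
Require Import Defs.
From mathcomp Require Import all_boot zify.
Set Implicit Arguments. Unset Strict Implicit. Unset Printing Implicit Defensive.

Section Struct.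
Variables (V : finType) (theta : nat) (H : 'I_theta -> {set V}).

Definition U k := \bigcup_(j : 'I_theta | j < k) H j.
Definition adjk k (u v : V) : bool :=
  (u != v) && [exists i : 'I_theta, [&& i < k, u \in H i & v \in H i]].

Lemma inU k u : reflect (exists2 j : 'I_theta, j < k & u \in H j) (u \in U k).
Proof. by apply: (iffP bigcupP) => -[j ? ?]; exists j. Qed.

Lemma U_pos k u : u \in U k -> 0 < k.
Proof. by case/inU => j /(leq_ltn_trans (leq0n j)). Qed.

Lemma adjkC k u v : adjk k u v = adjk k v u.
Proof.
rewrite /adjk eq_sym; congr (_ && _).
by apply/existsP/existsP => -[i /and3P[? ? ?]]; exists i; apply/and3P.
Qed.

Lemma adjk_new k (L : 'I_theta) u v : val L = k -> u \notin U k ->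
  adjk k.+1 u v -> (u \in H L) && (v \in H L).
Proof.
move=> hL hu /andP[_ /existsP[i /and3P[hi hui hvi]]].
have : ~~ (i < k) by apply: contra hu => hik; apply/inU; exists i.
rewrite -leqNgt => hki.
have -> : L = i by apply: val_inj; rewrite /= hL; apply/eqP; rewrite eqn_leq hki -ltnS hi.
by rewrite hui hvi.
Qed.

Lemma adj_in k (i : 'I_theta) u v : i < k -> u != v -> u \in H i -> v \in H i -> adjk k u v.
Proof. by move=> hi huv hu hv; rewrite /adjk huv; apply/existsP; exists i; rewrite hi hu hv. Qed.

Hypothesis hatt : forall i : 'I_theta, 0 < i ->
     exists x y : V, x != y /\
       H i :&: (\bigcup_(j : 'I_theta | j < i) H j) = [set x; y] /\
       exists j : 'I_theta, j < i /\ [set x; y] \subset H j.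

Lemma adjk_old k (L : 'I_theta) u v : val L = k -> u \in U k -> v \in U k ->
  adjk k.+1 u v -> adjk k u v.
Proof.
move=> hL hu hv huv; have k0 := U_pos hu.
case/andP: (huv) => nuv /existsP[i /and3P[hi hui hvi]].
case: (ltnP i k) => hik; first by apply: adj_in hik nuv hui hvi.
have eL : L = i by apply: val_inj; rewrite /= hL; apply/eqP; rewrite eqn_leq hik -ltnS hi.
have L0 : 0 < L by rewrite hL.
have [x [y [_ [hI [j [hj hs]]]]]] := hatt L0.
have inxy w : w \in H i -> w \in U k -> w \in H j.
  move=> h1 h2; apply: (subsetP hs); rewrite -hI inE eL h1 /=.
  by rewrite eL in hL; rewrite hL; move: h2; rewrite /U.
apply: (adj_in (i := j)) => //; [by rewrite -hL | exact: inxy | exact: inxy].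
Qed.

Lemma other (K : {set V}) u : 2 <= #|K| -> u \in K -> exists2 w, w \in K & w != u.
Proof.
move=> hK hu; have : 0 < #|K :\ u| by move: hK; rewrite (cardsD1 u) hu.
by rewrite card_gt0 => /set0Pn[w]; rewrite !inE => /andP[? ?]; exists w.
Qed.

Lemma clique_k k : k <= theta -> forall K : {set V}, 3 <= #|K| ->
  {in K &, forall u v, u != v -> adjk k u v} ->
  exists2 i : 'I_theta, i < k & K \subset H i.
Proof.
elim: k => [|k IH] hk K hK hadj.
  have : 0 < #|K| by apply: leq_trans hK.
  rewrite card_gt0 => /set0Pn[u hu]; have [w hw nw] := other (ltnW hK) hu.
  by move: (hadj _ _ hw hu nw) => /andP[_ /existsP[i /and3P[]]].
have hkt : k < theta by [].
pose L := Ordinal hkt.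
case: (boolP (K \subset U k)) => hKU.
  have [|i hi hs] := IH (ltnW hk) K hK.
    by move=> u v hu hv nuv; apply: (adjk_old (L := L)) => //;
      [apply: (subsetP hKU) | apply: (subsetP hKU) | apply: hadj].
  by exists i => //; apply: ltnW.
case/subsetPn: hKU => u hu hnu.
exists L => //; apply/subsetP => v hv.
case: (eqVneq v u) => [->|nvu].
  have [w hw nw] := other (ltnW hK) hu.
  by case/andP: (adjk_new (L := L) erefl hnu (hadj _ _ hu hw (ltac:(by rewrite eq_sym nw)))) => ->.
by case/andP: (adjk_new (L := L) erefl hnu (hadj _ _ hu hv (ltac:(by rewrite eq_sym nvu)))).
Qed.


Lemma three_in_pair (x0 y0 u1 u2 u3 : V) : u1 \in [set x0; y0] -> u2 \in [set x0; y0] ->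
  u3 \in [set x0; y0] -> u1 != u2 -> u1 != u3 -> u2 != u3 -> False.
Proof.
rewrite !inE => /orP[]/eqP E1 /orP[]/eqP E2 /orP[]/eqP E3; subst;
  by rewrite ?eqxx.
Qed.

Lemma adjk_mono k u v : adjk k u v -> adjk k.+1 u v.
Proof.
case/andP=> nuv /existsP[i /and3P[hi hu hv]].
by apply: (adj_in (i := i)) => //; apply: ltnW.
Qed.

Lemma cn_k k : k <= theta -> forall x y u1 u2 u3, x != y -> ~~ adjk k x y ->
  u1 != u2 -> u1 != u3 -> u2 != u3 ->
  adjk k x u1 -> adjk k y u1 -> adjk k x u2 -> adjk k y u2 ->
  adjk k x u3 -> adjk k y u3 -> False.
Proof.
elim: k => [|k IH] hk x y u1 u2 u3 nxy nadj n12 n13 n23.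
  by case/andP=> _ /existsP[i /and3P[]].
have hkt : k < theta by [].
pose L := Ordinal hkt.
have newcase : forall x y u1 u2 u3, x \notin U k -> x != y -> ~~ adjk k.+1 x y ->
  u1 != u2 -> u1 != u3 -> u2 != u3 ->
  adjk k.+1 x u1 -> adjk k.+1 y u1 -> adjk k.+1 x u2 -> adjk k.+1 y u2 ->
  adjk k.+1 x u3 -> adjk k.+1 y u3 -> False.
  move=> p q w1 w2 w3 hx nxy' nadj' n12' n13' n23' a1 b1 a2 b2 a3 b3.
  have xL : p \in H L by case/andP: (adjk_new (L := L) erefl hx a1).
  have uL u : adjk k.+1 p u -> u \in H L by move=> h; case/andP: (adjk_new (L := L) erefl hx h).
  have noyL : q \notin H L.
    by apply/negP => yL; move/negP: nadj'; apply; apply: (adj_in (i := L)).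
  case: (boolP (q \in U k)) => hy; last first.
    by move/negP: noyL; apply; case/andP: (adjk_new (L := L) erefl hy b1).
  have k0 : 0 < L by apply: (U_pos hy).
  have [X0 [Y0 [_ [hI _]]]] := hatt k0.
  have inP u : adjk k.+1 p u -> adjk k.+1 q u -> u \in [set X0; Y0].
    move=> ha hb; rewrite -hI inE (uL _ ha) /=.
    case: (boolP (u \in U k)) => hu; first by [].
    move/negP: noyL; case; rewrite adjkC in hb.
    by case/andP: (adjk_new (L := L) erefl hu hb).
  exact: (three_in_pair (inP _ a1 b1) (inP _ a2 b2) (inP _ a3 b3) n12' n13' n23').
move=> a1 b1 a2 b2 a3 b3.
case: (boolP (x \in U k)) => hx; last exact: (newcase x y u1 u2 u3).
case: (boolP (y \in U k)) => hy; last first.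
  by apply: (newcase y x u1 u2 u3) => //; rewrite 1?eq_sym // adjkC.
have inU' u : adjk k.+1 x u -> adjk k.+1 y u -> u \in U k.
  move=> ha hb; case: (boolP (u \in U k)) => hu //.
  rewrite adjkC in ha; rewrite adjkC in hb.
  case/andP: (adjk_new (L := L) erefl hu ha) => _ xL.
  case/andP: (adjk_new (L := L) erefl hu hb) => _ yL.
  by move/negP: nadj; case; apply: (adj_in (i := L)).
have old u : adjk k.+1 x u -> adjk k.+1 y u -> adjk k x u && adjk k y u.
  move=> ha hb; have hu := inU' u ha hb.
  by rewrite (adjk_old (L := L) erefl hx hu ha) (adjk_old (L := L) erefl hy hu hb).
case/andP: (old _ a1 b1) => c1 d1; case/andP: (old _ a2 b2) => c2 d2.
case/andP: (old _ a3 b3) => c3 d3.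
apply: (IH (ltnW hk) x y u1 u2 u3) => //.
by apply: contra nadj; apply: adjk_mono.
Qed.

Lemma inter3 (i j : 'I_theta) : 3 <= #|H i :&: H j| -> i = j.
Proof.
have gen (i' j' : 'I_theta) : i' < j' -> 3 <= #|H i' :&: H j'| -> False.
  move=> hij h3; have j0 : 0 < j' by apply: leq_ltn_trans hij.
  have [x0 [y0 [_ [hI _]]]] := hatt j0.
  have : H i' :&: H j' \subset [set x0; y0].
    rewrite -hI setIC; apply: setIS; apply/subsetP => w hw.
    by apply/bigcupP; exists i'.
  move/subset_leq_card; rewrite cards2 => h.
  by have := leq_trans h3 h; case: (x0 != y0).
case: (ltngtP i j) => h h3; first by case: (gen _ _ h h3).
  by rewrite setIC in h3; case: (gen _ _ h h3).
exact: val_inj.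
Qed.

End Struct.

Lemma card3 (T : finType) (u v w : T) : u != v -> u != w -> v != w -> #|[set u; v; w]| = 3.
Proof. move=> h1 h2 h3. rewrite -setUA cardsU1 cards2 h3 !inE negb_or h1 h2. by []. Qed.

Lemma A0 r : 5 <= r -> 0 < r - 2. Proof. lia. Qed.
Lemma A1 r : 5 <= r -> 3 <= r - 2. Proof. lia. Qed.
Lemma A2 r : 5 <= r -> 3 <= r - 1. Proof. lia. Qed.
Lemma A3 (r m : nat) : r = true + m -> m = r - 1. Proof. simpl; lia. Qed.
Lemma A4 r : r - 1 - 3 = r - 4. Proof. lia. Qed.
Lemma A5 r n : 5 <= r -> n < r - 2 -> n <= true + (r - 4). Proof. simpl; lia. Qed.

Section Main.
Variables (V : finType) (r theta : nat) (H : 'I_theta -> {set V}) (VG I : {set V}).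
Hypothesis hatt : forall i : 'I_theta, 0 < i ->
     exists x y : V, x != y /\
       H i :&: (\bigcup_(j : 'I_theta | j < i) H j) = [set x; y] /\
       exists j : 'I_theta, j < i /\ [set x; y] \subset H j.
Hypothesis hr : 5 <= r.
Hypothesis hSI : VG :&: tverts H \subset I.
Hypothesis hfin : forall I', ~ bp_step r H I I'.

Local Notation adjT := (adjk H theta).
Local Notation Z := (VG :|: I).

Lemma adjT_tnbhd u v : (v \in tnbhd H u) = adjT u v.
Proof.
rewrite inE /adjk eq_sym; congr (_ && _).
apply/existsP/existsP => -[i hi]; exists i; move: hi; first by rewrite ltn_ord.
by case/and3P => _ -> ->.
Qed.

Lemma adjT_tverts u v : adjT u v -> u \in tverts H.
Proof. by case/andP => _ /existsP[i /and3P[_ hu _]]; apply/bigcupP; exists i. Qed.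

Lemma adjH (i : 'I_theta) u v : u != v -> u \in H i -> v \in H i -> adjT u v.
Proof. by move=> *; apply: (adj_in (i := i)). Qed.

Lemma clique (K : {set V}) : 3 <= #|K| -> {in K &, forall u v, u != v -> adjT u v} ->
  exists i : 'I_theta, K \subset H i.
Proof. by move=> h1 h2; have [i _ ?] := clique_k hatt (leqnn theta) h1 h2; exists i. Qed.

Lemma cn x y u1 u2 u3 : x != y -> ~~ adjT x y ->
  u1 != u2 -> u1 != u3 -> u2 != u3 ->
  adjT x u1 -> adjT y u1 -> adjT x u2 -> adjT y u2 ->
  adjT x u3 -> adjT y u3 -> False.
Proof. exact: (cn_k hatt (leqnn theta)). Qed.

Lemma clique_add (K : {set V}) w : {in K &, forall u v, u != v -> adjT u v} ->
  (forall x, x \in K -> adjT w x) -> {in w |: K &, forall u v, u != v -> adjT u v}.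
Proof.
move=> hK hw u v; rewrite !in_setU1 => /predU1P[->|hu] /predU1P[->|hv] nuv.
- by rewrite eqxx in nuv.
- exact: hw.
- by rewrite adjkC; apply: hw.
- exact: hK.
Qed.

Lemma usual_contra u : u \notin I -> r - 2 <= #|tnbhd H u :&: I| -> False.
Proof.
move=> hu hc.
have : 0 < #|tnbhd H u :&: I| by apply: leq_trans hc; apply: A0.
rewrite card_gt0 => /set0Pn[v]; rewrite inE adjT_tnbhd => /andP[huv _].
case: (@hfin (u |: I)); left; exists u; split => //.
exact: adjT_tverts huv.
Qed.

Lemma ZI x y : x \in Z -> adjT x y -> x \in I.
Proof.
rewrite inE => /orP[hx|//] hxy; apply: (subsetP hSI); rewrite inE hx.
exact: adjT_tverts hxy.
Qed.

Lemma key (X : {set V}) a b : #|X| = r -> a \in X -> b \in X -> a != b ->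
  (forall u v, u \in X -> v \in X -> u != v -> [set u; v] != [set a; b] ->
     ((u \in Z) && (v \in Z)) || adjT u v) ->
  ~~ adjT a b -> a \notin Z -> False.
Proof.
move=> hX ha hb nab hP nadj haZ.
have neqS (u v w : V) : (w \in [set u; v]) != (w \in [set a; b]) -> [set u; v] != [set a; b].
  by move=> h; apply: contra h => /eqP ->.
have adjZ w x : w \in X -> w \notin Z -> x \in X -> x != w -> [set w; x] != [set a; b] -> adjT w x.
  move=> hw hwZ hx nxw hne.
  have := hP w x hw hx (ltac:(by rewrite eq_sym)) hne.
  by rewrite (negbTE hwZ).
have adjA x : x \in X -> x != a -> x != b -> adjT a x.
  move=> hx nxa nxb; apply: adjZ => //; apply: (neqS _ _ b).
  by rewrite !inE eqxx orbT [b == a]eq_sym (negbTE nab) [b == x]eq_sym (negbTE nxb).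
have adjO w x : w \in X -> w \notin Z -> w != a -> w != b -> x \in X -> x != w -> adjT w x.
  move=> hw hwZ nwa nwb hx nxw; apply: adjZ => //; apply: (neqS _ _ w).
  by rewrite !inE eqxx /= (negbTE nwa) (negbTE nwb).
have inR x : (x \in X :\: [set a; b]) = [&& x != a, x != b & x \in X].
  by rewrite !inE negb_or -andbA.
have cardR : #|X :\: [set a; b]| = r - 2.
  rewrite cardsD (setIidPr _) ?cards2 ?nab ?hX //.
  by apply/subsetP => w; rewrite !inE => /orP[]/eqP->.
have IZ : I \subset VG :|: I by apply: subsetUr.
have aI : a \notin I by apply: contra haZ; apply: (subsetP IZ).
case: (boolP [exists c, [&& c \in X, c != a, c != b & c \notin Z]]) =>
  [/existsP[c /and4P[hc nca ncb hcZ]] | hnone]; last first.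
  apply: (usual_contra aI).
  rewrite -cardR; apply: subset_leq_card; apply/subsetP => x; rewrite inR => /and3P[nxa nxb hx].
  have ax := adjA x hx nxa nxb.
  have xZ : x \in Z.
    by move/existsPn: hnone => /(_ x); rewrite hx nxa nxb /= negbK.
  rewrite inE adjT_tnbhd ax /=; apply: (ZI (y := a)) => //; by rewrite adjkC.
have adjc x : x \in X -> x != c -> adjT c x by move=> hx nxc; apply: adjO.
have cI : c \notin I by apply: contra hcZ; apply: (subsetP IZ).
case: (boolP (b \in Z)) => hbZ; last first.
  set R := X :\: [set a; b].
  have R3 : 3 <= #|R| by rewrite cardR; apply: A1.
  have adjB x : x \in X -> x != a -> x != b -> adjT b x.
    move=> hx nxa nxb; apply: adjZ => //; apply: (neqS _ _ a).
    by rewrite !inE eqxx (negbTE nab) [a == x]eq_sym (negbTE nxa).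
  have Rcl : {in R &, forall u v, u != v -> adjT u v}.
    move=> u v; rewrite !inR => /and3P[nua nub hu] /and3P[nva nvb hv] nuv.
    case: (eqVneq u c) => [eu|nuc]; first by rewrite eu; apply: adjc => //; rewrite -eu eq_sym.
    case: (eqVneq v c) => [ev|nvc]; first by rewrite ev adjkC; apply: adjc.
    case: (boolP (adjT u v)) => // nuv'; exfalso.
    apply: (cn (x := u) (y := v) (u1 := a) (u2 := b) (u3 := c)) => //;
      rewrite ?(eq_sym a c) ?(eq_sym b c) ?nca ?ncb //; rewrite adjkC;
      by [apply: adjA | apply: adjB | apply: adjc].
  have hA : forall x, x \in R -> adjT a x.
    by move=> x; rewrite inR => /and3P[? ? ?]; apply: adjA.
  have hB : forall x, x \in R -> adjT b x.
    by move=> x; rewrite inR => /and3P[? ? ?]; apply: adjB.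
  have [i hi] := clique (leq_trans R3 (subset_leq_card (subsetUr [set a] R))) (clique_add Rcl hA).
  have [j hj] := clique (leq_trans R3 (subset_leq_card (subsetUr [set b] R))) (clique_add Rcl hB).
  have eij : i = j.
    apply: (inter3 hatt); apply: (leq_trans R3); apply: subset_leq_card.
    apply/subsetP=> x hx; rewrite inE; apply/andP; split;
      [apply: (subsetP hi) | apply: (subsetP hj)]; by rewrite in_setU1 hx orbT.
  case/negP: nadj; apply: (adjH (i := i)) => //.
    by apply: (subsetP hi); rewrite in_setU1 eqxx.
  by rewrite eij; apply: (subsetP hj); rewrite in_setU1 eqxx.
have bI : b \in I by apply: (ZI (y := c)) => //; rewrite adjkC; apply: adjc; rewrite // eq_sym.
case: (boolP [exists d, [&& d \in X, d != a, d != b, d != c & d \notin Z]]) =>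
  [/existsP[d /and5P[hd nda ndb ndc hdZ]] | hnone]; last first.
  apply: (usual_contra cI).
  have bnot : b \notin (X :\: [set a; b]) :\ c.
    by rewrite !inE eqxx !(orbT, andbF, andFb).
  have cR : c \in X :\: [set a; b] by rewrite inR nca ncb hc.
  have := cardsD1 c (X :\: [set a; b]); rewrite cR cardR => hc1.
  apply: (@leq_trans #|b |: ((X :\: [set a; b]) :\ c)|).
    by rewrite cardsU1 bnot hc1.
  apply: subset_leq_card; apply/subsetP => x; rewrite in_setU1 => /predU1P[->|].
    by rewrite inE bI andbT adjT_tnbhd adjc // eq_sym.
  rewrite in_setD1 inR => /andP[nxc /and3P[nxa nxb hx]].
  have xZ : x \in Z.
    apply/negPn/negP => xZ'; move/existsPn: hnone => /(_ x) /negP H0; apply: H0; by apply/and5P; split.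
  rewrite inE adjT_tnbhd adjc //=; apply: (ZI (y := a)) => //; rewrite adjkC; exact: adjA.
have adjd x : x \in X -> x != d -> adjT d x by move=> hx nxd; apply: adjO.
have dI : d \notin I by apply: contra hdZ; apply: (subsetP IZ).
set K := X :\ b.
have inK x : (x \in K) = (x != b) && (x \in X) by rewrite !inE.
have cardK : #|K| = r - 1 by have := cardsD1 b X; rewrite hb hX; apply: A3.
have Kcl : {in K &, forall u v, u != v -> adjT u v}.
  move=> u v; rewrite !inK => /andP[nub hu] /andP[nvb hv] nuv.
  case: (eqVneq u c) => [eu|nuc]; first by rewrite eu; apply: adjc => //; rewrite -eu eq_sym.
  case: (eqVneq u d) => [eu|nud]; first by rewrite eu; apply: adjd => //; rewrite -eu eq_sym.
  case: (eqVneq v c) => [ev|nvc]; first by rewrite ev adjkC; apply: adjc.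
  case: (eqVneq v d) => [ev|nvd]; first by rewrite ev adjkC; apply: adjd.
  case: (eqVneq u a) => [eu|nua]; first by rewrite eu; apply: adjA => //; rewrite -eu eq_sym.
  case: (eqVneq v a) => [ev|nva]; first by rewrite ev adjkC; apply: adjA.
  case: (boolP (adjT u v)) => // nuv'; exfalso.
  apply: (cn (x := u) (y := v) (u1 := a) (u2 := c) (u3 := d)) => //;
    rewrite ?(eq_sym a c) ?(eq_sym a d) ?(eq_sym c d) ?nca ?nda ?ndc //; rewrite adjkC;
    by [apply: adjA | apply: adjc | apply: adjd].
have K3' : 3 <= #|K| by rewrite cardK; apply: A2.
have [i hi] := clique K3' Kcl.
have aK : a \in K by rewrite inK ha nab.
have cK : c \in K by rewrite inK hc ncb.
have dK : d \in K by rewrite inK hd ndb.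
have bHi : b \notin H i.
  apply/negP => bi; case/negP: nadj; apply: (adjH (i := i)) => //.
  exact: (subsetP hi).
have D z : z \in K -> z != c -> z != d -> adjT b z -> False.
  move=> hz nzc nzd hbz.
  set K3 := [set c; d; z].
  have K3H : K3 \subset H i.
    by apply/subsetP => w; rewrite !inE => /orP[/orP[]|]/eqP->; apply: (subsetP hi).
  have cl3 : {in K3 &, forall u v, u != v -> adjT u v}.
    move=> u v hu hv nuv; apply: (adjH (i := i)) => //; exact: (subsetP K3H).
  have c3 : #|K3| = 3 by rewrite card3 // eq_sym.
  have bc : adjT b c by rewrite adjkC; apply: adjc; rewrite // eq_sym.
  have bd : adjT b d by rewrite adjkC; apply: adjd; rewrite // eq_sym.
  have b3 : 3 <= #|b |: K3| by rewrite -{1}c3; apply: subset_leq_card; apply: subsetUr.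
  have hbK3 : forall x, x \in K3 -> adjT b x.
    by move=> x; rewrite !inE => /orP[/orP[]|]/eqP->.
  have [k hk] := clique b3 (clique_add cl3 hbK3).
  have eki : k = i.
    apply: (inter3 hatt); rewrite -c3; apply: subset_leq_card; apply/subsetP => x hx.
    by rewrite inE (subsetP K3H) // (subsetP hk) // in_setU1 hx orbT.
  by case/negP: bHi; rewrite -eki (subsetP hk) // in_setU1 eqxx.
set R' := K :\: [set a; c; d].
have inR' x : x \in R' -> [&& x != a, x != c, x != d & x \in K].
  by rewrite !inE !negb_or -!andbA.
have R'I : R' \subset I.
  apply/subsetP => x /inR' /and4P[nxa nxc nxd xK].
  move: (xK); rewrite inK => /andP[nxb hx].
  have := hP b x hb hx (ltac:(by rewrite eq_sym)).
  have ne : [set b; x] != [set a; b].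
    by apply: (neqS _ _ a); rewrite !inE eqxx (negbTE nab) [a == x]eq_sym (negbTE nxa).
  move/(_ ne) => /orP[/andP[_ xZ]|hbx]; last by case: (D x xK nxc nxd hbx).
  apply: (ZI (y := a)) => //; rewrite adjkC; exact: adjA.
have R'H : R' \subset H i by apply: subset_trans hi; apply: subsetDl.
have cardR' : #|R'| = r - 4.
  rewrite cardsD (setIidPr _) ?card3 ?cardK; first by rewrite A4.
  - by rewrite eq_sym.
  - by rewrite eq_sym.
  - by rewrite eq_sym.
  by apply/subsetP => w; rewrite !inE => /orP[/orP[]|]/eqP->; rewrite ?nab ?ha ?ncb ?hc ?ndb ?hd.
have ncd : c != d by rewrite eq_sym.
have tri : {in [set b; c; d] &, forall u v, u != v -> adjT u v}.
  have bc : adjT b c by rewrite adjkC; apply: adjc; rewrite // eq_sym.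
  have bd : adjT b d by rewrite adjkC; apply: adjd; rewrite // eq_sym.
  have cd : adjT c d by apply: adjc.
  move=> u v; rewrite !inE => /orP[/orP[]|]/eqP-> /orP[/orP[]|]/eqP->; rewrite ?eqxx // => _;
    try done; by rewrite adjkC.
have t3 : 3 <= #|[set b; c; d]| by rewrite card3 // eq_sym.
have [j hj] := clique t3 tri.
have bHj : b \in H j by apply: (subsetP hj); rewrite !inE eqxx.
have cHj : c \in H j by apply: (subsetP hj); rewrite !inE eqxx orbT.
have dHj : d \in H j by apply: (subsetP hj); rewrite !inE eqxx orbT.
have cHi : c \in H i by apply: (subsetP hi).
have dHi : d \in H i by apply: (subsetP hi).
have nij : i != j by apply: contraNneq bHi => ->.
have bR' : b \notin R' by apply/negP => /inR' /and4P[_ _ _]; rewrite inK eqxx.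
have N : tnbhd H c :&: I = b |: R'.
  apply/eqP; rewrite eq_sym eqEcard; apply/andP; split.
    apply/subsetP => x; rewrite in_setU1 => /predU1P[->|hx].
      by rewrite inE bI andbT adjT_tnbhd adjc // eq_sym.
    case/inR': (hx) => /and4P[_ nxc _ xK]; move: xK; rewrite inK => /andP[_ xX].
    by rewrite inE adjT_tnbhd adjc // (subsetP R'I).
  rewrite cardsU1 bR' cardR'.
  case: (leqP (r - 2) #|tnbhd H c :&: I|) => h; first by case: (usual_contra cI h).
  exact: A5.
have HiI : H i :&: I = R'.
  apply/eqP; rewrite eqEsubset; apply/andP; split; last first.
    by apply/subsetP => x hx; rewrite inE (subsetP R'H) // (subsetP R'I).
  apply/subsetP => x; rewrite in_setI => /andP[xH xI].
  have nxc : x != c by apply: contraNneq cI => <-.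
  have : x \in tnbhd H c :&: I by rewrite inE xI andbT adjT_tnbhd; apply: (adjH (i := i)); rewrite // eq_sym.
  rewrite N in_setU1 => /predU1P[ex|//]; by move: bHi; rewrite -ex xH.
have HjI : H j :&: I = [set b].
  apply/eqP; rewrite eqEsubset; apply/andP; split; last first.
    by apply/subsetP => x; rewrite inE => /eqP->; rewrite inE bHj bI.
  apply/subsetP => x; rewrite in_setI => /andP[xH xI].
  have nxc : x != c by apply: contraNneq cI => <-.
  have : x \in tnbhd H c :&: I by rewrite inE xI andbT adjT_tnbhd; apply: (adjH (i := j)); rewrite // eq_sym.
  rewrite N in_setU1 => /predU1P[->|hx]; first by rewrite inE.
  case/inR': (hx) => /and4P[_ nxc' nxd xK].
  have nxb : x != b by apply: contraNneq bR' => <-.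
  have bx : adjT b x by apply: (adjH (i := j)); rewrite // eq_sym.
  by case: (D x xK nxc' nxd bx).
have disj (A : {set V}) : A \subset I -> A :&: [set c; d] = set0.
  move=> hA; apply/setP => w; rewrite !inE.
  case: (boolP (w \in A)) => //= wA; have := subsetP hA w wA.
  by apply: contraTF => /orP[]/eqP->.
have fHi : [set c; d] \subset H i by apply/subsetP => w; rewrite !inE => /orP[]/eqP->.
have fHj : [set c; d] \subset H j by apply/subsetP => w; rewrite !inE => /orP[]/eqP->.
case: (@hfin (c |: I)); right; split.
  by move=> [J hJ]; case: (@hfin J); left.
exists [set c; d]; split.
  split; first by rewrite cards2 ncd.
  by exists i, j.
split; last by exists c; rewrite !inE eqxx.
exists i, j; split; first exact: nij.
split; first exact: fHi.
split; first exact: fHj.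
split; first by rewrite HiI.
split; first by rewrite HjI cards1.
by split; apply: disj; apply: subsetIr.
Qed.

End Main.

Lemma reach_sub (V : finType) r theta (H : 'I_theta -> {set V}) S I : bp_reach r H S I -> S \subset I.
Proof.
elim => [|I0 I1 _ IH [[u [_ _ _ ->]]|[_ [f [_ [_ [u [_ ->]]]]]]]]; first exact: subxx.
- by apply: subset_trans IH _; apply: subsetUr.
- by apply: subset_trans IH _; apply: subsetUr.
Qed.

Lemma memF (V : finType) theta (H : 'I_theta -> {set V}) (Z : {set V}) u v : u != v ->
  ([set u; v] \in complete_edges Z :|: tedges H) = ((u \in Z) && (v \in Z)) || adjk H theta u v.
Proof.
move=> uv; rewrite in_setU /complete_edges /tedges !in_set cards2 uv /= subUset !sub1set.
congr (_ || _); rewrite /adjk uv /=.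
apply/existsP/existsP => -[i hi]; exists i; move: hi; rewrite ?subUset ?sub1set ?ltn_ord //.
Qed.

Theorem lemma6p3 (V : finType) (r theta : nat) (H : 'I_theta -> {set V})
    (VG : {set V}) (EG : {set {set V}}) :
  5 <= r ->
  is_Krtree r H ->
  (forall e, e \in EG -> #|e| = 2 /\ e \subset VG) ->
  forall I : {set V}, bp_final r H (VG :&: tverts H) I ->
  forall e : {set V},
    kr_closure r (VG :|: tverts H) (EG :|: tedges H) e ->
    e \in complete_edges (VG :|: I) :|: tedges H.
Proof.
move=> hr [_ [_ hatt]] hEG I [hreach hfin] e hcl.
have hSI := reach_sub hreach.
elim: hcl => {e} [e he|X e hXW hX he2 heX _ IH].
  case/setUP: he => he; last by rewrite in_setU he orbT.
  have [h2 hs] := hEG e he.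
  rewrite in_setU /complete_edges in_set h2 eqxx /=.
  by rewrite (subset_trans hs) // subsetUl.
have /cards2P[a [b [nab ee]]] : #|e| == 2 by rewrite he2.
subst e; rewrite memF //.
have hP : forall u v, u \in X -> v \in X -> u != v -> [set u; v] != [set a; b] ->
    ((u \in VG :|: I) && (v \in VG :|: I)) || adjk H theta u v.
  move=> u v hu hv uv ne; rewrite -memF //; apply: IH => //.
  - by rewrite cards2 uv.
  - by apply/subsetP => w; rewrite !inE => /orP[]/eqP->.
have ha : a \in X by apply: (subsetP heX); rewrite !inE eqxx.
have hb : b \in X by apply: (subsetP heX); rewrite !inE eqxx orbT.
case: (boolP (adjk H theta a b)) => hab; first by rewrite orbT.
rewrite orbF; apply/negPn/negP => hn.
case: (boolP (a \in VG :|: I)) => haZ; last first.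
  exact: (key hatt hr hSI hfin hX ha hb nab hP hab haZ).
have hbZ : b \notin VG :|: I by apply: contra hn => ->; rewrite haZ.
have hP' : forall u v, u \in X -> v \in X -> u != v -> [set u; v] != [set b; a] ->
    ((u \in VG :|: I) && (v \in VG :|: I)) || adjk H theta u v.
  by move=> u v hu hv uv; rewrite [[set b; a]]setUC; apply: hP.
apply: (key hatt hr hSI hfin hX hb ha _ hP' _ hbZ); first by rewrite eq_sym.
by rewrite adjkC.
Qed.
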